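(* Let $A$ be a finite tree rooted at $e$, with all arcs directed from the root towards the leaves, let $R\subseteq V(A)$ be a set of destinations containing all leaves of $A$, and let $D\subseteq V(A)$. Let $u\neq e$ be a vertex of $A$ having $\ell$ children $u_1,\dots,u_\ell$, and for each $i$, $1\le i\le \ell$, let $(b_i,d_i,\mathrm{load}_i)$ be the window of the solution $\mathcal{S}(D)$ on the arc $a^{u_i}$. Then the window of $\mathcal{S}(D)$ on the arc $a^{u}$ is \[ \begin{cases} \left(1,\ 1+\sum_{i=1}^{\ell} d_i,\ \sum_{i=1}^{\ell}\mathrm{load}_i+1\right) & \text{if } u\in D,\\ \left(1+\sum_{i=1}^{\ell} b_i,\ \sum_{i=1}^{\ell} d_i,\ \sum_{i=1}^{\ell}\mathrm{load}_i+\sum_{i=1}^{\ell} b_i+1\right) & \text{if } u\notin D \text{ and } u\in R,\\ \left(\sum_{i=1}^{\ell} b_i,\ \sum_{i=1}^{\ell} d_i,\ \sum_{i=1}^{\ell}\mathrm{load}_i+\sum_{i=1}^{\ell} b_i\right) & \text{if } u\notin D \text{ and } u\notin R. \end{cases} \]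
   Context: Setting (multicast with diffusing nodes): $A$ is a multicast tree for a request $(e,R)$: a tree rooted at the source $e$, arcs directed away from $e$, whose leaves lie in the destination set $R$. A set $D\subseteq V(A)$ is a set of diffusing (branching) nodes. The solution $\mathcal{S}(D)$ is a set of directed paths in $A$ such that: every node of $R$ is the final extremity of exactly one path; every node of $D$ is the final extremity of at most one path; the origin of each path is either $e$ or a node of $D$ which is itself the final extremity of some path; a node of $D$ lies on a path only as its origin or final extremity. As in the paper, $\mathcal{S}(D)$ is taken to be the solution in which each vertex $x\neq e$ of $R\cup D$ is the final extremity of exactly one path, whose origin is the nearest proper ancestor of $x$ belonging to $D\cup\{e\}$. For a vertex $u$, $A^u$ is the subtree of $A$ rooted at $u$, and for $u\neq e$, $a^u$ is the arc joining the parent of $u$ to $u$. The path number $\mathrm{pn}(u)$ is the number of paths of $\mathcal{S}(D)$ that pass through $u$ or terminate at $u$ (equivalently, that use the arc $a^u$). The window of $\mathcal{S}(D)$ on arc $a^u$ is the triple $(\mathrm{pn}(u),\ |D\cap V(A^u)|,\ \mathrm{load})$, where $\mathrm{load}=\sum_{w\in V(A^u)}\mathrm{pn}(w)$ is the load of $\mathcal{S}(D)$ in $A^u$, i.e. the number of pairs (path, arc) with the path using the arc, over the arcs of $A^u$ together with $a^u$. *)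

(* Defs.v *)
From mathcomp Require Import all_boot.
Set Implicit Arguments. Unset Strict Implicit. Unset Printing Implicit Defensive.

(* A finite rooted tree on the vertex type T is given by its root e and a
   parent map: the arc a^v goes from parent v to v (for v <> e);
   parent e = e by convention and every vertex reaches e by iterating parent
   (see the hypotheses of lemma2). *)

Definition anc (T : finType) (parent : T -> T) (x y : T) : bool :=
  [exists k : 'I_#|T|.+1, iter k parent y == x].

(* children of u (the root e is excluded since parent e = e by convention) *)
Definition children (T : finType) (e : T) (parent : T -> T) (u : T) : {set T} :=
  [set v | (parent v == u) && (v != e)].

Definition subtree (T : finType) (parent : T -> T) (u : T) : {set T} :=
  [set w | anc parent u w].

Fixpoint climb (T : finType) (e : T) (parent : T -> T) (D : {set T})
    (fuel : nat) (y : T) : T :=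
  match fuel with
  | 0 => e
  | n.+1 => if (y == e) || (y \in D) then y else climb e parent D n (parent y)
  end.

(* origin of the path of S(D) ending at x : nearest proper ancestor of x in D ∪ {e} *)
Definition origin (T : finType) (e : T) (parent : T -> T) (D : {set T}) (x : T) : T :=
  climb e parent D #|T| (parent x).

(* pn(u): number of paths of S(D) (one for each x <> e in R ∪ D, from origin x
   to x) passing through u or terminating at u, i.e. containing u but not
   having u as origin. *)
Definition pn (T : finType) (e : T) (parent : T -> T) (R D : {set T}) (u : T) : nat :=
  #|[set x | [&& x \in R :|: D, x != e,
              anc parent (origin e parent D x) u, anc parent u x
              & u != origin e parent D x]]|.

Definition load (T : finType) (e : T) (parent : T -> T) (R D : {set T}) (u : T) : nat :=
  \sum_(w in subtree parent u) pn e parent R D w.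

Definition window (T : finType) (e : T) (parent : T -> T) (R D : {set T}) (u : T)
  : nat * nat * nat :=
  (pn e parent R D u, #|D :&: subtree parent u|, load e parent R D u).

(* Main.v *)
Require Import Defs.
From mathcomp Require Import all_boot zify.
Set Implicit Arguments. Unset Strict Implicit. Unset Printing Implicit Defensive.


Lemma ancP (T : finType) (parent : T -> T) x y :
  reflect (exists k, iter k parent y = x) (anc parent x y).
Proof.
apply: (iffP existsP) => [[k /eqP Hk]|[k Hk]]; first by exists k.
have Hc : fconnect parent y x by rewrite -Hk fconnect_iter.
have Hlt : findex parent y x < #|T|.+1.
  apply: leq_trans (findex_max Hc) _; apply: leq_trans (max_card _) _; exact: leqnSn.
by exists (Ordinal Hlt); rewrite /= iter_findex.
Qed.

Lemma iter_e (T : Type) (e : T) (parent : T -> T) (Hroot : parent e = e) n :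
  iter n parent e = e.
Proof. by elim: n => //= n ->. Qed.

Lemma cycle_e (T : finType) (e : T) (parent : T -> T) (Hroot : parent e = e)
  (Htree : forall v : T, exists k : nat, iter k parent v = e) x n :
  0 < n -> iter n parent x = x -> x = e.
Proof.
move=> n0 Hx; have [m Hm] := Htree x.
have H1 : forall j, iter (j * n) parent x = x.
  by elim=> [|j IH] //; rewrite mulSn iterD IH Hx.
have Hmn : m <= m * n by rewrite leq_pmulr.
by rewrite -(H1 m) -(subnK Hmn) iterD Hm iter_e.
Qed.

Lemma anc_trans (T : finType) (parent : T -> T) x y z :
  anc parent x y -> anc parent y z -> anc parent x z.
Proof.
move=> /ancP[i Hi] /ancP[j Hj]; apply/ancP; exists (i + j).
by rewrite iterD Hj.
Qed.

Lemma anc_refl (T : finType) (parent : T -> T) x : anc parent x x.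
Proof. by apply/ancP; exists 0. Qed.

Lemma anc_parent (T : finType) (parent : T -> T) x : anc parent (parent x) x.
Proof. by apply/ancP; exists 1. Qed.


Lemma anc_lt (T : finType) (parent : T -> T) x y :
  anc parent x y -> exists2 k, k < #|T| & iter k parent y = x.
Proof.
move=> /ancP[k Hk].
have Hc : fconnect parent y x by rewrite -Hk fconnect_iter.
exists (findex parent y x); last by rewrite iter_findex.
apply: leq_trans (findex_max Hc) _; exact: max_card.
Qed.

Lemma climb_anc (T : finType) (e : T) (parent : T -> T) (D : {set T})
  (Htree : forall v : T, exists k : nat, iter k parent v = e) n y :
  anc parent (climb e parent D n y) y.
Proof.
elim: n y => [|n IH] y /=.
  by have [k Hk] := Htree y; apply/ancP; exists k.
case: ifP => _; first exact: anc_refl.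
exact: anc_trans (IH _) (anc_parent _ _).
Qed.

Lemma climb_in (T : finType) (e : T) (parent : T -> T) (D : {set T}) n y :
  (climb e parent D n y == e) || (climb e parent D n y \in D).
Proof.
elim: n y => [|n IH] y /=; first by rewrite eqxx.
by case: ifP => // ->.
Qed.

Lemma climb_near (T : finType) (e : T) (parent : T -> T) (D : {set T}) n y k z :
  k < n -> iter k parent y = z -> (z == e) || (z \in D) ->
  anc parent z (climb e parent D n y).
Proof.
elim: n y k => [|n IH] y k //= Hk Hz Hzin.
case: ifP => Hy; first by apply/ancP; exists k.
case: k Hk Hz => [|k] Hk Hz; first by move: Hz Hy => /= ->; rewrite Hzin.
apply: (IH _ k) => //; by rewrite -iterSr.
Qed.

Lemma origin_in (T : finType) (e : T) (parent : T -> T) (D : {set T}) x :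
  (origin e parent D x == e) || (origin e parent D x \in D).
Proof. exact: climb_in. Qed.

Lemma origin_anc (T : finType) (e : T) (parent : T -> T) (D : {set T})
  (Htree : forall v : T, exists k : nat, iter k parent v = e) x :
  anc parent (origin e parent D x) x.
Proof. exact: anc_trans (climb_anc D Htree _ _) (anc_parent _ _). Qed.

Lemma origin_near (T : finType) (e : T) (parent : T -> T) (D : {set T}) x z :
  (z == e) || (z \in D) -> anc parent z (parent x) ->
  anc parent z (origin e parent D x).
Proof.
move=> Hz /anc_lt[k Hk Hi]; exact: climb_near Hk Hi Hz.
Qed.


Lemma child_unique (T : finType) (e : T) (parent : T -> T) (Hroot : parent e = e) (Htree : forall v : T, exists k : nat, iter k parent v = e) (u : T) (Hu : u != e) c1 c2 w : c1 \in children e parent u -> c2 \in children e parent u ->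
  anc parent c1 w -> anc parent c2 w -> c1 = c2.
Proof.
rewrite !inE => /andP[/eqP P1 _] /andP[/eqP P2 _].
have key : forall a b k1 k2, parent a = u -> parent b = u ->
    iter k1 parent w = a -> iter k2 parent w = b -> k1 <= k2 -> a = b.
  move=> a b k1 k2 Pa Pb H1 H2 Hle.
  move: H2; rewrite -(subnK Hle) iterD H1.
  case: (k2 - k1) => [//|d].
  rewrite iterSr Pa => Hd.
  have : iter d.+1 parent u = u by rewrite iterS Hd Pb.
  by move/(cycle_e Hroot Htree) => /(_ isT) Hue; move: Hu; rewrite Hue eqxx.
move=> /ancP[k1 H1] /ancP[k2 H2].
case: (leqP k1 k2) => Hk; first exact: key H1 H2 Hk.
by apply: esym; apply: key H2 H1 (ltnW Hk).
Qed.

Lemma child_exists (T : finType) (e : T) (parent : T -> T) (Hroot : parent e = e) (Htree : forall v : T, exists k : nat, iter k parent v = e) (u : T) (Hu : u != e) w : anc parent u w -> w != u ->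
  exists2 c, c \in children e parent u & anc parent c w.
Proof.
move=> /ancP[[|k] Hk] Hw; first by move: Hw; rewrite -Hk eqxx.
exists (iter k parent w); last by apply/ancP; exists k.
rewrite inE -iterS Hk eqxx /=; apply/eqP => He.
by move: Hk Hu; rewrite iterS He Hroot => ->; rewrite eqxx.
Qed.

Lemma child_not_anc (T : finType) (e : T) (parent : T -> T) (Hroot : parent e = e) (Htree : forall v : T, exists k : nat, iter k parent v = e) (u : T) (Hu : u != e) c : c \in children e parent u -> ~~ anc parent c u.
Proof.
rewrite inE => /andP[/eqP Pc _]; apply/negP => /ancP[k Hk].
have : iter k.+1 parent u = u by rewrite iterS Hk Pc.
by move/(cycle_e Hroot Htree) => /(_ isT) Hue; move: Hu; rewrite Hue eqxx.
Qed.

Lemma child_anc (T : finType) (e : T) (parent : T -> T) (u : T) c : c \in children e parent u -> anc parent u c.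
Proof. by rewrite inE => /andP[/eqP <- _]; apply: anc_parent. Qed.

Lemma sum_subtree (T : finType) (e : T) (parent : T -> T) (Hroot : parent e = e) (Htree : forall v : T, exists k : nat, iter k parent v = e) (u : T) (Hu : u != e) (f : T -> nat) :
  \sum_(w in subtree parent u) f w =
  f u + \sum_(c in children e parent u) \sum_(w in subtree parent c) f w.
Proof.
rewrite (bigD1 u) /=; last by rewrite inE anc_refl.
congr (_ + _).
rewrite [RHS](eq_bigr (fun c => \sum_w (if anc parent c w then f w else 0)));
  last by move=> c _; rewrite big_mkcond; apply: eq_bigr => w _; rewrite inE.
rewrite [RHS]exchange_big big_mkcond /=; apply: eq_bigr => w _.
rewrite inE.
case: (boolP (anc parent u w && (w != u))) => [/andP[Hw Hwu]|Hn].
  have [c0 Hc0 Ha0] := child_exists Hroot Htree Hu Hw Hwu.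
  rewrite (bigD1 c0) //= Ha0 big1 ?addn0 // => c /andP[Hc Hne].
  case: ifP => // Hac; by move: Hne; rewrite (child_unique Hroot Htree Hu Hc Hc0 Hac Ha0) eqxx.
rewrite big1 // => c Hc; case: ifP => // Hac; exfalso; move: Hn.
rewrite (anc_trans (child_anc Hc) Hac) /=; apply/negP; rewrite negbK.
apply/negP => /eqP Hwu; move: Hac; rewrite Hwu; apply/negP; exact: (child_not_anc Hroot Htree Hu).
Qed.



Lemma anc_antisym (T : finType) (e : T) (parent : T -> T) (Hroot : parent e = e)
  (Htree : forall v : T, exists k : nat, iter k parent v = e) a b :
  anc parent a b -> anc parent b a -> a = b.
Proof.
move=> /ancP[i Hi] /ancP[j Hj].
case: (posnP (j + i)) => [/eqP|Hpos].
  by rewrite addn_eq0 => /andP[/eqP Hj0 /eqP Hi0]; move: Hi; rewrite Hi0.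
have Hb : iter (j + i) parent b = b by rewrite iterD Hi Hj.
have Hbe := cycle_e Hroot Htree Hpos Hb.
by rewrite -Hi Hbe iter_e.
Qed.

Lemma anc_par (T : finType) (parent : T -> T) c x :
  anc parent c x -> anc parent (parent c) (parent x).
Proof. by move=> /ancP[k Hk]; apply/ancP; exists k; rewrite -iterSr iterS Hk. Qed.

Lemma anc_strict (T : finType) (parent : T -> T) o c :
  anc parent o c -> c != o -> anc parent o (parent c).
Proof.
move=> /ancP[[|k] Hk] Hc; first by move: Hc; rewrite -Hk eqxx.
by apply/ancP; exists k; rewrite -iterSr.
Qed.

Lemma sum_card (T : finType) (A B : {set T}) :
  #|A :&: B| = \sum_(w in B) (w \in A).
Proof.
rewrite -sum1_card big_mkcond [RHS]big_mkcond; apply: eq_bigr => w _.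
by rewrite inE; case: (w \in A); case: (w \in B).
Qed.

Lemma pn_sum (T : finType) (e : T) (parent : T -> T) (R D : {set T}) u :
  pn e parent R D u = \sum_(x in subtree parent u)
    [&& x \in R :|: D, x != e, anc parent (origin e parent D x) u,
        anc parent u x & u != origin e parent D x].
Proof.
rewrite /pn -sum1_card big_mkcond [RHS]big_mkcond; apply: eq_bigr => w _.
rewrite !inE.
by case: (w \in R) (w \in D) (w != e) (anc parent u w) => [] [] [] []; rewrite /= ?andbF.
Qed.


Theorem lemma2 (T : finType) (e : T) (parent : T -> T) (R D : {set T})
  (Hroot : parent e = e)
  (Htree : forall v : T, exists k : nat, iter k parent v = e)
  (Hleaves : forall v : T, children e parent v = set0 -> v \in R)
  (u : T) (Hu : u != e) :
  let b := fun c => (window e parent R D c).1.1 in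
  let d := fun c => (window e parent R D c).1.2 in
  let ld := fun c => (window e parent R D c).2 in
  let C := children e parent u in
  window e parent R D u =
  if u \in D then
    (1, 1 + \sum_(c in C) d c, \sum_(c in C) ld c + 1)
  else if u \in R then
    (1 + \sum_(c in C) b c, \sum_(c in C) d c,
     \sum_(c in C) ld c + \sum_(c in C) b c + 1)
  else
    (\sum_(c in C) b c, \sum_(c in C) d c,
     \sum_(c in C) ld c + \sum_(c in C) b c).
Proof.
move=> b d ld C; rewrite /b /d /ld /C /window /= {b d ld C}.
set o := origin e parent D.
have Ho_in x : (o x == e) || (o x \in D) := origin_in e parent D x.
have Ho_anc x : anc parent (o x) x := origin_anc D Htree x.
have Hdc : #|D :&: subtree parent u| =
    (u \in D) + \sum_(c in children e parent u) #|D :&: subtree parent c|.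
  rewrite sum_card (sum_subtree Hroot Htree Hu); congr (_ + _).
  by apply: eq_bigr => c _; rewrite sum_card.
have Hld : load e parent R D u =
    pn e parent R D u + \sum_(c in children e parent u) load e parent R D c.
  exact: (sum_subtree Hroot Htree Hu).
rewrite Hld Hdc.
have Hou : u != o u.
  apply/eqP => Heq.
  have H1 : anc parent u (parent u) by rewrite {1}Heq; exact: climb_anc.
  have := anc_antisym Hroot Htree H1 (anc_parent _ _).
  move=> Hp; have : iter 1 parent u = u by rewrite /= -Hp.
  by move/(cycle_e Hroot Htree) => /(_ isT) Hue; move: Hu; rewrite Hue eqxx.
have Hpn := @pn_sum T e parent R D u; rewrite -/o in Hpn; rewrite (sum_subtree Hroot Htree Hu) in Hpn.
rewrite anc_refl Hu Ho_anc Hou /= in Hpn.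
have Hsub c x : c \in children e parent u -> x \in subtree parent c ->
    anc parent c x /\ anc parent u x /\ x != u.
  move=> Hc; rewrite inE => Hx; split => //; split.
    exact: anc_trans (child_anc Hc) Hx.
  apply/eqP => Hxu; move: Hx; rewrite Hxu; apply/negP.
  have := child_not_anc Hroot Htree Hu Hc; by [].
case: ifP => HuD.
  have Hpn1 : pn e parent R D u = 1.
    rewrite Hpn inE HuD orbT big1 // => c Hc; rewrite big1 // => x Hx.
    have [Hcx [Hux Hxu]] := Hsub c x Hc Hx.
    case: (boolP (anc parent (o x) u)) => Hox; last by rewrite !andbF.
    have Huo : anc parent u (o x).
      apply: origin_near; first by rewrite HuD orbT.
      have := anc_par Hcx; move: Hc; rewrite inE => /andP[/eqP -> _] //.
    by rewrite (anc_antisym Hroot Htree Hox Huo) eqxx !andbF.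
  by rewrite Hpn1 addn1 add1n.
have Hpn2 : pn e parent R D u = (u \in R) + \sum_(c in children e parent u) pn e parent R D c.
  rewrite Hpn inE HuD orbF andbT; congr (_ + _); apply: eq_bigr => c Hc.
  rewrite pn_sum -/o; apply: eq_bigr => x Hx.
  have [Hcx [Hux Hxu]] := Hsub c x Hc Hx.
  rewrite Hcx Hux; congr (_ && (_ && _)).
  have Hpc : parent c = u by move: Hc; rewrite inE => /andP[/eqP].
  apply/andP/andP => [[Hou' Huo]|[Hoc Hco]].
    split; first exact: anc_trans Hou' (child_anc Hc).
    apply/eqP => Hco; move: Hou'; rewrite -Hco; apply/negP.
    have := child_not_anc Hroot Htree Hu Hc; by [].
  split; first by rewrite -Hpc; exact: anc_strict.
  apply/eqP => Huo; move: (Ho_in x); rewrite -Huo HuD orbF; exact/negP.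
case: ifP => HuR; rewrite Hpn2 HuR.
  rewrite /=; congr (_, _, _); rewrite ?add0n; lia.
rewrite /=; congr (_, _, _); rewrite ?add0n; lia.
Qed.
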